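(* Under the hypotheses of the Point SAGA convergence theorem (each $f_i$ differentiable and $\mu$-strongly convex with $\mu>0$, and the Point-SAGA similarity bound with constant $\nu>0$), run Point SAGA with stepsize $\gamma=\frac{1}{\nu^2/\mu+(n-1)\mu}$ and let $\Psi_k:=\|x_k-x_\star\|^2+\gamma\mu\sum_{i=1}^n\|w_k^i-x_\star\|^2$. Then for any $\varepsilon>0$, $$k\ge\left(n+\frac{\nu^2}{\mu^2}\right)\log\left(\frac{\Psi_0}{\varepsilon}\right)\quad\Longrightarrow\quad\mathbb{E}[\Psi_k]\le\varepsilon.$$
   Context: Setting: $f(x)=\frac1n\sum_{i=1}^nf_i(x)$, $x_\star$ its minimizer. Point-SAGA similarity bound: for all $x^1,\dots,x^n\in\mathbb{R}^d$, $\frac1n\sum_{j=1}^n\|\nabla f_j(x^j)-\frac1n\sum_{i=1}^n\nabla f_i(x^i)-\nabla f_j(x_\star)\|^2\le\nu^2\frac1n\sum_{j=1}^n\|x^j-x_\star\|^2$. Point SAGA: parameters $\gamma>0$, $x_0,w_0^1,\dots,w_0^n\in\mathbb{R}^d$. For $k\ge0$: sample $i_k$ uniformly from $[n]$ independently; $h_k=\nabla f_{i_k}(w_k^{i_k})-\frac1n\sum_{j=1}^n\nabla f_j(w_k^j)$; $x_{k+1}=\operatorname{prox}_{\gamma f_{i_k}}(x_k+\gamma h_k)$; $w_{k+1}^{i_k}=x_{k+1}$, $w_{k+1}^j=w_k^j$ for $j\ne i_k$. $\operatorname{prox}_{\gamma\phi}(y):=\arg\min_x\{\phi(x)+\frac1{2\gamma}\|x-y\|^2\}$.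 *)

(* Defs.v *)
From HB Require Import structures.
From mathcomp Require Import all_boot all_order all_algebra.
From mathcomp Require Import all_classical all_reals all_analysis.
Set Implicit Arguments. Unset Strict Implicit. Unset Printing Implicit Defensive.
Import Order.TTheory GRing.Theory Num.Theory.
Import numFieldNormedType.Exports.
Local Open Scope ring_scope.
Local Open Scope classical_set_scope.

Section PointSAGA.
Variables (R : realType) (d : nat).
Notation vec := 'rV[R]_d.

Definition dotv (u v : vec) : R := \sum_(j < d) u ord0 j * v ord0 j.
Definition sqnorm (v : vec) : R := dotv v v.

Definition grad (f : vec -> R^o) (x : vec) : vec :=
  \row_(j < d) ('d f x) (delta_mx ord0 j : vec).

Definition strongly_convex (mu : R) (f : vec -> R) : Prop :=
  forall (x y : vec) (t : R), 0 <= t <= 1 ->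
    f (t *: x + (1 - t) *: y) <=
      t * f x + (1 - t) * f y - mu / 2 * t * (1 - t) * sqnorm (x - y).

(* prox_{gamma phi}(y) := argmin_x { phi x + 1/(2 gamma) ||x - y||^2 }
   (a minimizer chosen by classical choice; under strong convexity it
   exists and is unique) *)
Definition prox (gamma : R) (phi : vec -> R) (y : vec) : vec :=
  xget y [set x | forall z : vec,
      phi x + (2 * gamma)^-1 * sqnorm (x - y) <=
      phi z + (2 * gamma)^-1 * sqnorm (z - y)].

Variable n : nat.
Variable fs : 'I_n -> vec -> R^o.

Definition psaga_step (gamma : R) (st : vec * ('I_n -> vec)) (i : 'I_n)
  : vec * ('I_n -> vec) :=
  let: (x, w) := st in
  let h := grad (fs i) (w i) - n%:R^-1 *: \sum_(j < n) grad (fs j) (w j) in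
  let x' := prox gamma (fs i) (x + gamma *: h) in
  (x', fun j => if j == i then x' else w j).

Definition psaga_run (gamma : R) (x0 : vec) (w0 : 'I_n -> vec) (s : seq 'I_n)
  : vec * ('I_n -> vec) := foldl (psaga_step gamma) (x0, w0) s.

Definition Psi (gamma mu : R) (xs : vec) (st : vec * ('I_n -> vec)) : R :=
  sqnorm (st.1 - xs) + gamma * mu * \sum_(i < n) sqnorm (st.2 i - xs).

(* E[Psi_k]: i_0..i_{k-1} i.i.d. uniform on [n], i.e. uniform over 'I_n^k *)
Definition expected_Psi (gamma mu : R) (xs x0 : vec) (w0 : 'I_n -> vec)
  (k : nat) : R :=
  (n%:R ^+ k)^-1 *
    \sum_(s : k.-tuple 'I_n) Psi gamma mu xs (psaga_run gamma x0 w0 s).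

End PointSAGA.

(* Main.v *)
Require Import Defs.
From HB Require Import structures.
From mathcomp Require Import all_boot all_order all_algebra.
From mathcomp Require Import all_classical all_reals all_analysis.
From mathcomp Require Import ring lra.
Import Order.TTheory GRing.Theory Num.Theory.
Import numFieldNormedType.Exports.
Local Open Scope ring_scope.
Local Open Scope classical_set_scope.
Set Implicit Arguments. Unset Strict Implicit.

Section S.
Variables (R : realType) (d : nat).
Notation vec := 'rV[R]_d.
Implicit Types u v w : vec.

Lemma dotvC u v : dotv u v = dotv v u.
Proof. by apply: eq_bigr => j _; rewrite mulrC. Qed.
Lemma dotvDl u v w : dotv (u + v) w = dotv u w + dotv v w.
Proof. by rewrite /dotv -big_split; apply: eq_bigr => j _; rewrite mxE mulrDl. Qed.
Lemma dotvZl (a : R) u w : dotv (a *: u) w = a * dotv u w.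
Proof. by rewrite /dotv mulr_sumr; apply: eq_bigr => j _; rewrite mxE mulrA. Qed.
Lemma dotvNl u w : dotv (- u) w = - dotv u w.
Proof. by rewrite -scaleN1r dotvZl mulN1r. Qed.
Lemma dotvBl u v w : dotv (u - v) w = dotv u w - dotv v w.
Proof. by rewrite dotvDl dotvNl. Qed.
Lemma dotvDr u v w : dotv w (u + v) = dotv w u + dotv w v.
Proof. by rewrite dotvC dotvDl !(dotvC w). Qed.
Lemma dotvZr (a : R) u w : dotv w (a *: u) = a * dotv w u.
Proof. by rewrite dotvC dotvZl dotvC. Qed.
Lemma dotvNr u w : dotv w (- u) = - dotv w u.
Proof. by rewrite dotvC dotvNl dotvC. Qed.
Lemma dotvBr u v w : dotv w (u - v) = dotv w u - dotv w v.
Proof. by rewrite dotvDr dotvNr. Qed.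
Lemma dotv0l w : dotv 0 w = 0.
Proof. by rewrite /dotv big1 // => j _; rewrite mxE mul0r. Qed.
Lemma dotv_suml (I : finType) (F : I -> vec) w :
  dotv (\sum_i F i) w = \sum_i dotv (F i) w.
Proof.
elim/big_rec2: _ => [|i y1 y2 _ <-]; first exact: dotv0l.
by rewrite dotvDl.
Qed.
Lemma sqnorm_ge0 u : 0 <= sqnorm u.
Proof. by apply: sumr_ge0 => j _; rewrite -expr2 sqr_ge0. Qed.
Lemma sqnormD u v : sqnorm (u + v) = sqnorm u + 2 * dotv u v + sqnorm v.
Proof. rewrite /sqnorm dotvDl !dotvDr (dotvC v u); ring. Qed.
Lemma sqnormB u v : sqnorm (u - v) = sqnorm u - 2 * dotv u v + sqnorm v.
Proof. rewrite /sqnorm dotvDl !dotvDr !dotvNl !dotvNr (dotvC v u); ring. Qed.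
Lemma sqnormN u : sqnorm (- u) = sqnorm u.
Proof. by rewrite /sqnorm dotvNl dotvNr opprK. Qed.
Lemma sqnormZ (a : R) u : sqnorm (a *: u) = a ^+ 2 * sqnorm u.
Proof. by rewrite /sqnorm dotvZl dotvZr mulrA expr2. Qed.
Lemma coord_le_sqnorm u j : u ord0 j ^+ 2 <= sqnorm u.
Proof.
rewrite /sqnorm /dotv (bigD1 j) //= -expr2 lerDl.
by apply: sumr_ge0 => i _; rewrite -expr2 sqr_ge0.
Qed.
Lemma sqnorm_le0 u : sqnorm u <= 0 -> u = 0.
Proof.
move=> H; apply/rowP => j; rewrite mxE.
have := coord_le_sqnorm u j => H2.
have : u ord0 j ^+ 2 = 0 by apply/eqP; rewrite eq_le sqr_ge0 andbT (le_trans H2 H).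
by move/eqP; rewrite sqrf_eq0 => /eqP.
Qed.
Lemma young g u (k : R) : 0 < k ->
  - (sqnorm g / (2 * k)) - k / 2 * sqnorm u <= dotv g u.
Proof.
move=> k0.
have H := sqnorm_ge0 (g + k *: u).
rewrite sqnormD sqnormZ dotvZr in H.
have -> : - (sqnorm g / (2 * k)) - k / 2 * sqnorm u =
  dotv g u - (sqnorm g + 2 * (k * dotv g u) + k ^+ 2 * sqnorm u) / (2 * k).
  by field; rewrite gt_eqF.
rewrite lerBlDr lerDl; apply: divr_ge0 => //; rewrite mulr_ge0 // ltW //.
Qed.

Lemma grad_dot (f : vec -> R^o) x v : differentiable f x ->
  'D_v f x = dotv (grad f x) v.
Proof.
move=> df; rewrite deriveE //.
rewrite {1}(matrix_sum_delta v) big_ord1 linear_sum /dotv.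
apply: eq_bigr => j _; rewrite linearZ /= mxE mulrC.
by [].
Qed.
Lemma dir_approx (f : vec -> R^o) (x v : vec) : differentiable f x ->
  forall e : R, 0 < e -> exists t : R, [/\ 0 < t, t <= 1, t < e &
     `| 'D_v f x - t^-1 * (f (x + t *: v) - f x)| < e].
Proof.
move=> df e e0.
have := diff_derivable (v:=v) df; rewrite /derivable => /cvgrPdist_lt /(_ e e0).
rewrite near_withinE => H.
have H2 : \forall t \near (0:R)^'+, `| 'D_v f x - t^-1 * (f (x + t *: v) - f x)| < e.
  rewrite near_withinE; apply: filterS H => t Ht /lt0r_neq0 /Ht.
  by rewrite (addrC x).
have [t [[Ht1 Ht2] [Ht3 Ht4]]] := filter_ex (filterI (filterI H2 (nbhs_right_gt 0)) (filterI (nbhs_right_le (@ltr01 R)) (nbhs_right_lt e0))).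
by exists t; split.
Qed.

Lemma dir_le (f : vec -> R^o) x v (a b : R) : differentiable f x ->
  (forall t, 0 < t -> t <= 1 -> f (x + t *: v) - f x <= t * a + t ^+ 2 * b) ->
  dotv (grad f x) v <= a.
Proof.
move=> df H; rewrite -grad_dot //; apply/ler_addgt0Pr => eps eps0.
have b1 : 0 < `|b| + 1 by rewrite ltr_pwDr // normr_ge0.
have e0 : 0 < eps / (`|b| + 1) by rewrite divr_gt0.
have [t [t0 t1 te Ht]] := @dir_approx f x v df _ e0.
have Hq : t^-1 * (f (x + t *: v) - f x) <= a + t * b.
  rewrite ler_pdivrMl //; apply: le_trans (H t t0 t1) _; rewrite le_eqVlt; apply/orP; left; apply/eqP; ring.
have Htb : t * b <= eps / (`|b| + 1) * `|b|.
  apply: le_trans (ler_norm _) _; rewrite normrM (gtr0_norm t0) ler_wpM2r // ?normr_ge0 // ltW //.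
have HE : eps / (`|b| + 1) * `|b| + eps / (`|b| + 1) = eps by field; rewrite gt_eqF.
move: Ht; rewrite ltr_norml => /andP[_ Ht].
move: HE Htb Hq Ht.
set E := eps / _; set B := `|b|; set q := _ * (_ - _); set D := 'D_v f x; set tb := t * b.
lra.
Qed.

Lemma dir_ge (f : vec -> R^o) x v (a b : R) : differentiable f x ->
  (forall t, 0 < t -> t <= 1 -> t * a - t ^+ 2 * b <= f (x + t *: v) - f x) ->
  a <= dotv (grad f x) v.
Proof.
move=> df H; rewrite -grad_dot //; apply/ler_addgt0Pr => eps eps0.
have b1 : 0 < `|b| + 1 by rewrite ltr_pwDr // normr_ge0.
have e0 : 0 < eps / (`|b| + 1) by rewrite divr_gt0.
have [t [t0 t1 te Ht]] := @dir_approx f x v df _ e0.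
have Hq : a - t * b <= t^-1 * (f (x + t *: v) - f x).
  rewrite ler_pdivlMl //; apply: le_trans (H t t0 t1); rewrite le_eqVlt; apply/orP; left; apply/eqP; ring.
have Htb : t * b <= eps / (`|b| + 1) * `|b|.
  apply: le_trans (ler_norm _) _; rewrite normrM (gtr0_norm t0) ler_wpM2r // ?normr_ge0 // ltW //.
have HE : eps / (`|b| + 1) * `|b| + eps / (`|b| + 1) = eps by field; rewrite gt_eqF.
move: Ht; rewrite ltr_norml => /andP[Ht _].
move: HE Htb Hq Ht.
set E := eps / _; set B := `|b|; set q := _ * (_ - _); set D := 'D_v f x; set tb := t * b.
lra.
Qed.

Lemma sc_first (mu : R) (f : vec -> R^o) x z : strongly_convex mu f ->
  differentiable f x ->
  f x + dotv (grad f x) (z - x) + mu / 2 * sqnorm (z - x) <= f z.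
Proof.
move=> sc df.
suff : dotv (grad f x) (z - x) <= f z - f x - mu / 2 * sqnorm (z - x) by lra.
apply: (@dir_le f x (z - x) _ (mu / 2 * sqnorm (z - x)) df) => t t0 t1.
have := sc z x t; rewrite (ltW t0) t1 => /(_ isT).
have -> : t *: z + (1 - t) *: x = x + t *: (z - x).
  by apply/rowP => j; rewrite !mxE; ring.
move=> H; have H' : f (x + t *: (z - x)) - f x <= t * f z + (1 - t) * f x - mu / 2 * t * (1 - t) * sqnorm (z - x) - f x.
  by rewrite lerD2r.
apply: le_trans H' _.
rewrite le_eqVlt; apply/orP; left; apply/eqP; ring.
Qed.

Lemma arith_mono (A B S P Q mu : R) : A + - P + mu / 2 * S <= B ->
  B + Q + mu / 2 * S <= A -> mu * S <= P - Q.
Proof. move=> H1 H2; lra. Qed.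

Lemma sc_mono (mu : R) (f : vec -> R^o) x z : strongly_convex mu f ->
  differentiable f x -> differentiable f z ->
  mu * sqnorm (x - z) <= dotv (grad f x - grad f z) (x - z).
Proof.
move=> sc dx dz.
have H1 := @sc_first mu f x z sc dx; have H2 := @sc_first mu f z x sc dz.
have E : z - x = - (x - z) by rewrite opprB.
rewrite E sqnormN dotvNr in H1.
rewrite dotvBl; exact: arith_mono H1 H2.
Qed.
Lemma cont_sum (T : topologicalType) (I : Type) (s : seq I) (F : I -> T -> R) :
  (forall i, continuous (F i)) -> continuous (fun x => \sum_(i <- s) F i x).
Proof.
move=> HF; elim: s => [|i s IH].
  have -> : (fun x => \sum_(i <- [::]) F i x) = (fun=> 0) by apply: funext => x; rewrite big_nil.
  by move=> x; exact: cst_continuous.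
have -> : (fun x => \sum_(j <- i :: s) F j x) = (F i + (fun x => \sum_(j <- s) F j x)).
  by apply: funext => x; rewrite big_cons.
by move=> x; apply: continuousD; [exact: HF | exact: IH].
Qed.

Lemma sqnorm_cont (y : vec) : continuous (fun z : vec => sqnorm (z - y)).
Proof.
rewrite /sqnorm /dotv.
apply: cont_sum => j z.
have hc : {for z, continuous (fun z : vec => (z - y) ord0 j)}.
  have -> : (fun z : vec => (z - y) ord0 j) = (fun z : vec => z ord0 j - y ord0 j).
    by apply: funext => w; rewrite !mxE.
  by apply: continuousB; [exact: coord_continuous | exact: cst_continuous].
exact: (continuousM hc hc).
Qed.
End S.

Section S.
Variables (R : realType) (d : nat).
Notation vec := 'rV[R]_d.

Lemma arith_low (fy fz D S A mu c k : R) : k = mu / 2 + c ->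
  fy + D + mu / 2 * S <= fz -> - A - k / 2 * S <= D ->
  fy - A + k / 2 * S <= fz + c * S.
Proof. move=> hk H1 H2; rewrite hk in H2 *; lra. Qed.

Lemma arith_out (t yi r : R) : 1 <= r -> ~~ (yi - r <= t <= yi + r) -> r < (t - yi) ^+ 2.
Proof.
move=> r1; rewrite negb_and -!ltNge => /orP[H|H]; nra.
Qed.

Lemma arith_fin (fy Gz sg k S : R) : 0 < k -> sg / k ^+ 2 + 1 < S ->
  fy - sg / (2 * k) + k / 2 * S <= Gz -> fy <= Gz.
Proof.
move=> k0 HS H.
have E : sg / (2 * k) = k / 2 * (sg / k ^+ 2) by field; rewrite gt_eqF.
have H2 : k / 2 * (sg / k ^+ 2) <= k / 2 * S.
  by rewrite ler_wpM2l ?divr_ge0 ?ltW //; lra.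
rewrite E in H; lra.
Qed.

Lemma prox_min (mu gamma : R) (f : vec -> R^o) (y : vec) : 0 <= mu -> 0 < gamma ->
  strongly_convex mu f -> (forall x, differentiable f x) ->
  exists x, forall z, f x + (2 * gamma)^-1 * sqnorm (x - y) <=
                       f z + (2 * gamma)^-1 * sqnorm (z - y).
Proof.
move=> mu0 g0 sc df.
set c := (2 * gamma)^-1.
have c0 : 0 < c by rewrite invr_gt0 mulr_gt0.
pose G := fun z => f z + c * sqnorm (z - y).
set g := grad f y.
pose k := mu / 2 + c.
have k0 : 0 < k by rewrite /k ltr_wpDl // divr_ge0.
pose r := sqnorm g / k ^+ 2 + 1.
have r1 : 1 <= r by rewrite /r lerDr divr_ge0 ?sqnorm_ge0 // exprn_ge0 // ltW.
have lowG : forall z, f y - sqnorm g / (2 * k) + k / 2 * sqnorm (z - y) <= G z.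
  move=> z; have H1 := @sc_first R d mu f y z sc (df y).
  have H2 := @young R d g (z - y) k k0.
  exact: arith_low (erefl k) H1 H2.
pose K := [set v : vec | forall i, `[y ord0 i - r, y ord0 i + r]%classic (v ord0 i)].
have cK : compact K.
  have := (@rV_compact _ d (fun i => `[y ord0 i - r, y ord0 i + r]%classic) (fun i => @segment_compact _ _ _)).
  exact.
have Ky : K y.
  move=> i /=; rewrite in_itv /=; apply/andP; split.
    by rewrite lerBlDr lerDl (le_trans ler01 r1).
  by rewrite lerDl (le_trans ler01 r1).
have K0 : K !=set0 by exists y.
have cG : continuous G.
  move=> z; apply: (@continuousD _ R^o _ f (fun z => c * sqnorm (z - y))).
    exact: differentiable_continuous.
  exact: (continuousM (@cst_continuous _ _ c z) (@sqnorm_cont R d y z)).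
have [x Kx minx] := EVT_min_rV K0 cK (continuous_subspaceT cG).
exists x => z.
have [Kz|nKz] := pselect (K z).
  by apply: minx; rewrite inE.
have Gxy : G x <= G y by apply: minx; rewrite inE.
apply: (le_trans Gxy); rewrite /G subrr.
rewrite /sqnorm dotv0l mulr0 addr0.
move/existsNP: nKz => [i /= Hi].
have Hr : r < sqnorm (z - y).
  apply: (lt_le_trans _ (@coord_le_sqnorm R d (z - y) i)).
  rewrite !mxE; apply: arith_out r1 _; apply/negP => H; apply: Hi.
  by rewrite /= in_itv /= H.
exact: arith_fin k0 Hr (lowG z).
Qed.

Lemma arith_prox1 (fz fx c S0 D V t : R) :
  fx + c * S0 <= fz + c * (S0 + 2 * (t * D) + t ^+ 2 * V) ->
  t * (- (2 * c) * D) - t ^+ 2 * (c * V) <= fz - fx.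
Proof. move=> H; nra. Qed.

Lemma prox_opt (mu gamma : R) (f : vec -> R^o) (y : vec) : 0 <= mu -> 0 < gamma ->
  strongly_convex mu f -> (forall x, differentiable f x) ->
  prox gamma f y + gamma *: grad f (prox gamma f y) = y.
Proof.
move=> mu0 g0 sc df.
have Hmin := xgetPex y (@prox_min mu gamma f y mu0 g0 sc df).
rewrite -/(prox gamma f y) in Hmin.
set x := prox gamma f y in Hmin *.
set c := (2 * gamma)^-1 in Hmin.
have Hd : forall v, - (2 * c) * dotv (x - y) v <= dotv (grad f x) v.
  move=> v; apply: (@dir_ge R d f x v _ (c * sqnorm v) (df x)) => t t0 t1.
  apply: arith_prox1; apply: le_trans (Hmin (x + t *: v)) _.
  have -> : x + t *: v - y = (x - y) + t *: v by rewrite addrAC.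
  by rewrite sqnormD dotvZr sqnormZ.
set u := x + gamma *: grad f x - y.
have Hu : forall v, 0 <= dotv u v.
  move=> v; rewrite /u dotvBl dotvDl dotvZl.
  have := Hd v; rewrite dotvBl.
  have E : gamma * (2 * c) = 1 by rewrite /c; field; rewrite gt_eqF.
  move: E; set D := dotv x v; set Dy := dotv y v; set G := dotv (grad f x) v.
  move=> E H. have H2 := ler_wpM2l (ltW g0) H. 
  rewrite mulrA mulrN E in H2. lra.
have : sqnorm u <= 0.
  by have := Hu (- u); rewrite dotvNr oppr_ge0.
move/sqnorm_le0 => /eqP; rewrite subr_eq0 => /eqP //.
Qed.
End S.

Section Alg.
Variables (R : realType) (d n : nat) (fs : 'I_n -> 'rV[R]_d -> R^o).
Notation vec := 'rV[R]_d.

Lemma arith_step (A P B g m : R) : 0 <= g -> 0 <= m -> m * A <= P ->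
  0 <= B - 2 * (m * P) + m ^+ 2 * A ->
  (1 + g * m) ^+ 2 * A <= A + 2 * (g * P) + g ^+ 2 * B.
Proof.
move=> g0 m0 H1 H2; rewrite -subr_ge0.
have -> : A + 2 * (g * P) + g ^+ 2 * B - (1 + g * m) ^+ 2 * A =
  2 * g * (P - m * A) + g ^+ 2 * (B - 2 * (m * P) + m ^+ 2 * A) + 2 * g ^+ 2 * m * (P - m * A) by ring.
have HP : 0 <= P - m * A by rewrite subr_ge0.
apply: addr_ge0; first apply: addr_ge0.
- by apply: mulr_ge0 => //; apply: mulr_ge0.
- by apply: mulr_ge0 => //; apply: exprn_ge0.
- by apply: mulr_ge0 => //; apply: mulr_ge0 => //; apply: mulr_ge0 => //; apply: exprn_ge0.
Qed.

Lemma vid1 (a b c e : vec) (g : R) : (a - b) + g *: (c - e) = (a + g *: c) - b - g *: e.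
Proof. by apply/rowP => j; rewrite !mxE; ring. Qed.

Lemma step_bound (mu gamma : R) (xs x : vec) (w : 'I_n -> vec) (i : 'I_n) :
  0 <= mu -> 0 < gamma -> (forall i, strongly_convex mu (fs i)) ->
  (forall i x, differentiable (fs i) x) ->
  (1 + gamma * mu) ^+ 2 * sqnorm ((psaga_step fs gamma (x, w) i).1 - xs) <=
  sqnorm ((x - xs) + gamma *: (grad (fs i) (w i) - n%:R^-1 *: \sum_(j < n) grad (fs j) (w j) - grad (fs i) xs)).
Proof.
move=> mu0 g0 sc df /=.
set h := grad (fs i) (w i) - _.
have Hopt := @prox_opt R d mu gamma (fs i) (x + gamma *: h) mu0 g0 (sc i) (df i).
set x' := prox gamma (fs i) (x + gamma *: h) in Hopt *.
have E : (x - xs) + gamma *: (h - grad (fs i) xs) =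
    (x' - xs) + gamma *: (grad (fs i) x' - grad (fs i) xs).
  by rewrite [RHS]vid1 Hopt -vid1.
rewrite E (sqnormD (x' - xs)) dotvZr sqnormZ.
have Hm := @sc_mono R d mu (fs i) x' xs (sc i) (df i x') (df i xs).
rewrite dotvC in Hm.
apply: arith_step => //; first exact: ltW.
set b := grad (fs i) x' - grad (fs i) xs.
have H := @sqnorm_ge0 R d (b - mu *: (x' - xs)).
rewrite (sqnormB b) dotvZr sqnormZ dotvC in H.
exact: H.
Qed.
End Alg.

Local Opaque grad.
Section Alg2.
Variables (R : realType) (d n : nat) (fs : 'I_n -> 'rV[R]_d -> R^o).
Notation vec := 'rV[R]_d.

Lemma sum_const_ord (c : R) : \sum_(i < n) c = n%:R * c.
Proof. by rewrite sumr_const card_ord mulr_natl. Qed.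

Lemma sum_grad_xs (nu : R) (xs : vec) : (0 < n)%N ->
  (forall w : 'I_n -> vec,
     n%:R^-1 * \sum_(j < n)
        sqnorm (grad (fs j) (w j) - n%:R^-1 *: \sum_(i < n) grad (fs i) (w i)
                - grad (fs j) xs)
     <= nu ^+ 2 * (n%:R^-1 * \sum_(j < n) sqnorm (w j - xs))) ->
  \sum_(i < n) grad (fs i) xs = 0.
Proof.
move=> n0 Hs; have nR : n%:R != 0 :> R by rewrite pnatr_eq0 -lt0n.
have := Hs (fun _ => xs).
under eq_bigr do rewrite addrAC subrr add0r sqnormN.
under [X in _ <= _ * (_ * X)]eq_bigr do rewrite subrr.
rewrite !sum_const_ord /sqnorm dotv0l mulr0 mulr0 mulr0 mulrA mulVf // mul1r.
move/sqnorm_le0/eqP; rewrite scaler_eq0 invr_eq0 (negbTE nR) /= => /eqP //.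
Qed.

Definition gvec (xs : vec) (w : 'I_n -> vec) (i : 'I_n) : vec :=
  grad (fs i) (w i) - n%:R^-1 *: \sum_(j < n) grad (fs j) (w j) - grad (fs i) xs.

Lemma sum_gvec (xs : vec) w : (0 < n)%N -> \sum_(i < n) grad (fs i) xs = 0 ->
  \sum_(i < n) gvec xs w i = 0.
Proof.
move=> n0 H0; have nR : n%:R != 0 :> R by rewrite pnatr_eq0 -lt0n.
rewrite /gvec !sumrB [X in _ - X = _]H0 subr0 sumr_const card_ord -scaler_nat scalerA mulfV // scale1r.
by rewrite subrr.
Qed.

Lemma sumsq (a : vec) (g : 'I_n -> vec) (c : R) : \sum_(i < n) g i = 0 ->
  \sum_(i < n) sqnorm (a + c *: g i) = n%:R * sqnorm a + c ^+ 2 * \sum_(i < n) sqnorm (g i).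
Proof.
move=> H0.
under eq_bigr do rewrite sqnormD sqnormZ dotvZr.
rewrite !big_split /= sum_const_ord -!mulr_sumr.
have -> : \sum_(i < n) dotv a (g i) = 0.
  under eq_bigr do rewrite dotvC.
  by rewrite -dotv_suml H0 dotv0l.
by rewrite !mulr0 addr0.
Qed.

Lemma sumw (w : 'I_n -> vec) (i : 'I_n) (x' xs : vec) :
  \sum_(j < n) sqnorm ((if j == i then x' else w j) - xs) =
  \sum_(j < n) sqnorm (w j - xs) - sqnorm (w i - xs) + sqnorm (x' - xs).
Proof.
rewrite (bigD1 i) //= eqxx [in RHS](bigD1 i) //=.
have -> : \sum_(j < n | j != i) sqnorm ((if j == i then x' else w j) - xs) =
          \sum_(j < n | j != i) sqnorm (w j - xs).
  by apply: eq_bigr => j /negbTE ->.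
set A := sqnorm (x' - xs); set B := sqnorm (w i - xs); set C := \sum_(j < n | j != i) _.
ring.
Qed.

Lemma arith_final (a N X S SY G q v : R) : 0 < a -> 0 <= S -> 0 <= q ->
  (1 + a) ^+ 2 * SY <= N * X + q * G -> G <= v * S ->
  q * v = a - a ^+ 2 * (N - 1) ->
  (1 + a) * SY + a * (N * S - S) <= N * (1 + a)^-1 * (X + a * S).
Proof.
move=> a0 S0 q0 H1 H2 Hq.
have a1 : 0 < 1 + a by rewrite ltr_wpDr // ltW.
rewrite -(ler_pM2l a1).
have -> : (1 + a) * (N * (1 + a)^-1 * (X + a * S)) = N * X + a * N * S.
  by field; rewrite gt_eqF.
have H3 : q * G <= (a - a ^+ 2 * (N - 1)) * S by rewrite -Hq -mulrA ler_wpM2l.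
have -> : (1 + a) * ((1 + a) * SY + a * (N * S - S)) =
   (1 + a) ^+ 2 * SY + (a + a ^+ 2) * (N - 1) * S by ring.
have -> : N * X + a * N * S = N * X + (a - a ^+ 2 * (N - 1)) * S + (a + a ^+ 2) * (N - 1) * S by ring.
rewrite lerD2r; apply: le_trans H1 _; rewrite lerD2l //.
Qed.

Lemma gamma_id (mu nu N : R) : 0 < mu -> 1 <= N ->
  let gamma := (nu ^+ 2 / mu + (N - 1) * mu)^-1 in
  0 < nu -> gamma ^+ 2 * nu ^+ 2 = gamma * mu - (gamma * mu) ^+ 2 * (N - 1).
Proof.
move=> mu0 N1 gamma nu0.
have D0 : 0 < nu ^+ 2 / mu + (N - 1) * mu.
  have h1 : 0 < nu ^+ 2 / mu by rewrite divr_gt0 // exprn_gt0.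
  have h2 : 0 <= (N - 1) * mu by rewrite mulr_ge0 // ?subr_ge0 // ltW.
  lra.
rewrite /gamma; field.
rewrite gt_eqF //= gt_eqF //.
have h1 : 0 < nu ^+ 2 by rewrite exprn_gt0.
have h2 : 0 <= (N - 1) * mu * mu by rewrite !mulr_ge0 // ?subr_ge0 // ltW.
lra.
Qed.
End Alg2.

Section Alg3.
Variables (R : realType) (d n : nat) (fs : 'I_n -> 'rV[R]_d -> R^o).
Notation vec := 'rV[R]_d.

Lemma step_sum (mu nu gamma : R) (xs x : vec) (w : 'I_n -> vec) :
  (0 < n)%N -> 0 < mu -> 0 < gamma ->
  (forall i, strongly_convex mu (fs i)) -> (forall i x, differentiable (fs i) x) ->
  (forall w : 'I_n -> vec,
     n%:R^-1 * \sum_(j < n)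
        sqnorm (grad (fs j) (w j) - n%:R^-1 *: \sum_(i < n) grad (fs i) (w i)
                - grad (fs j) xs)
     <= nu ^+ 2 * (n%:R^-1 * \sum_(j < n) sqnorm (w j - xs))) ->
  gamma ^+ 2 * nu ^+ 2 = gamma * mu - (gamma * mu) ^+ 2 * (n%:R - 1) ->
  \sum_(i < n) Psi gamma mu xs (psaga_step fs gamma (x, w) i) <=
    n%:R * (1 + gamma * mu)^-1 * Psi gamma mu xs (x, w).
Proof.
move=> n0 mu0 g0 sc df Hs Hg.
have nR : 0 < n%:R :> R by rewrite ltr0n.
pose Y i := sqnorm ((psaga_step fs gamma (x, w) i).1 - xs).
set S := \sum_(j < n) sqnorm (w j - xs).
have HPsi : forall i, Psi gamma mu xs (psaga_step fs gamma (x, w) i) =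
    (1 + gamma * mu) * Y i + gamma * mu * (S - sqnorm (w i - xs)).
  move=> i; rewrite /Psi /Y /= sumw -/S; set P := sqnorm (prox _ _ _ - xs); set Q := sqnorm (w i - xs); ring.
under eq_bigr do rewrite HPsi.
rewrite big_split /= -!mulr_sumr sumrB sum_const_ord -/S.
have H1 : (1 + gamma * mu) ^+ 2 * \sum_(i < n) Y i <=
    n%:R * sqnorm (x - xs) + gamma ^+ 2 * \sum_(i < n) sqnorm (gvec fs xs w i).
  rewrite mulr_sumr -sumsq; last exact: sum_gvec (sum_grad_xs n0 Hs).
  apply: ler_sum => i _; rewrite /Y /gvec; exact: (step_bound xs x w i (ltW mu0) g0 sc df).
have H2 : \sum_(i < n) sqnorm (gvec fs xs w i) <= nu ^+ 2 * S.
  have := Hs w; rewrite -/S mulrA (mulrC (nu ^+ 2)) -mulrA ler_pM2l ?invr_gt0 //.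
have S0 : 0 <= S by apply: sumr_ge0 => j _; exact: sqnorm_ge0.
rewrite /Psi /=.
apply: arith_final H1 H2 _ => //.
all: try by rewrite mulr_gt0.
all: try exact: sqr_ge0.
all: by rewrite Hg exprMn.
Qed.
End Alg3.

Lemma sum_tuple_cons (R : realType) (n k : nat) (F : k.+1.-tuple 'I_n -> R) :
  \sum_(t : k.+1.-tuple 'I_n) F t =
  \sum_(i : 'I_n) \sum_(s : k.-tuple 'I_n) F [tuple of i :: s].
Proof.
rewrite pair_big /=.
pose h := fun p : 'I_n * k.-tuple 'I_n => [tuple of p.1 :: p.2].
pose g := fun t : k.+1.-tuple 'I_n => (thead t, [tuple of behead t]).
have hb : bijective h.
  exists g.
    by case=> i s; rewrite /g /h /= theadE; congr pair; apply: val_inj.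
  by move=> t; rewrite /g /h /=; rewrite [RHS]tuple_eta; apply: val_inj.
rewrite (reindex h) //; exact: onW_bij.
Qed.

Lemma pow_le (R : realType) (a b : R) (K : nat) : 0 <= a -> a <= b -> a ^+ K <= b ^+ K.
Proof.
move=> a0 ab; elim: K => [|K IH]; first by rewrite !expr0.
by rewrite !exprS ler_pM // exprn_ge0.
Qed.

Lemma final_arith (R : realType) (rho q m P eps : R) (K : nat) :
  0 < q -> q * m = 1 -> 0 <= rho -> rho <= 1 - q -> 0 <= P -> 0 < eps ->
  m * ln (P / eps) <= K%:R -> rho ^+ K * P <= eps.
Proof.
move=> q0 qm r0 rq P0 e0 Hk.
have [->|Pp] := eqVneq P 0; first by rewrite mulr0 ltW.
have P1 : 0 < P by rewrite lt_neqAle eq_sym Pp.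
have Pe : 0 < P / eps by rewrite divr_gt0.
have H1 : rho ^+ K <= expR (K%:R * - q).
  rewrite expRM_natl; apply: pow_le => //.
  by apply: le_trans rq _; rewrite -[1 - q]/(1 + - q) expR_ge1Dx.
have H2 : K%:R * - q <= - ln (P / eps).
  rewrite mulrN lerN2.
  have := ler_wpM2l (ltW q0) Hk; rewrite mulrA qm mul1r => H.
  by rewrite [K%:R * q]mulrC.
have H3 : expR (- ln (P / eps)) = eps / P.
  by rewrite expRN lnK ?posrE // invf_div.
have H4 : rho ^+ K <= eps / P.
  rewrite -H3; apply: (le_trans H1). rewrite ler_expR; exact: H2.
have := ler_wpM2r P0 H4; rewrite divfK //.
all: by rewrite gt_eqF.
Qed.

Section Exp.
Variables (R : realType) (d n : nat) (fs : 'I_n -> 'rV[R]_d -> R^o).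
Notation vec := 'rV[R]_d.

Definition Ek (gamma mu : R) (xs : vec) (k : nat) (st : vec * ('I_n -> vec)) : R :=
  (n%:R ^+ k)^-1 *
    \sum_(s : k.-tuple 'I_n) Psi gamma mu xs (foldl (psaga_step fs gamma) st s).

Lemma Psi_ge0 gamma mu (xs : vec) (st : vec * ('I_n -> vec)) : 0 <= gamma * mu -> 0 <= Psi gamma mu xs st.
Proof.
move=> h; rewrite /Psi; apply: addr_ge0; first exact: sqnorm_ge0.
by apply: mulr_ge0 => //; apply: sumr_ge0 => i _; exact: sqnorm_ge0.
Qed.

Lemma Ek_le (gamma mu rho : R) (xs : vec) : (0 < n)%N -> 0 <= rho ->
  (forall st, \sum_(i < n) Psi gamma mu xs (psaga_step fs gamma st i) <=
              n%:R * rho * Psi gamma mu xs st) ->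
  forall k st, Ek gamma mu xs k st <= rho ^+ k * Psi gamma mu xs st.
Proof.
move=> n0 r0 Hst; elim=> [|k IH] st.
  rewrite /Ek expr0 invr1 mul1r expr0 mul1r.
  have -> : \sum_(s : 0.-tuple 'I_n) Psi gamma mu xs (foldl (psaga_step fs gamma) st s)
     = \sum_(s : 0.-tuple 'I_n) Psi gamma mu xs st.
    by apply: eq_bigr => s _; rewrite (tuple0 s).
  by rewrite sumr_const card_tuple card_ord expn0.
have nR : 0 < n%:R :> R by rewrite ltr0n.
rewrite /Ek sum_tuple_cons /=.
have -> : (n%:R ^+ k.+1)^-1 *
   \sum_(i < n) \sum_(s : k.-tuple 'I_n) Psi gamma mu xs (foldl (psaga_step fs gamma) st [tuple of i :: s])
   = n%:R^-1 * \sum_(i < n) Ek gamma mu xs k (psaga_step fs gamma st i).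
  rewrite /Ek -mulr_sumr exprS invfM mulrA [_ * (_ ^+ k)^-1]mulrC -mulrA. done.
apply: (le_trans (y := n%:R^-1 * \sum_(i < n) (rho ^+ k * Psi gamma mu xs (psaga_step fs gamma st i)))).
  apply: ler_wpM2l; first by rewrite invr_ge0 ltW.
  by apply: ler_sum => i _; exact: IH.
rewrite -mulr_sumr mulrA [_ * rho ^+ k]mulrC -mulrA exprSr -mulrA.
apply: ler_wpM2l; first exact: exprn_ge0.
rewrite ler_pdivrMl //; rewrite mulrA; exact: Hst.
Qed.
End Exp.

Local Close Scope classical_set_scope.
Unset Implicit Arguments.

Theorem mainTheorem13 (R : realType) (d n : nat)
  (fs : 'I_n -> 'rV[R]_d -> R^o) (mu nu : R) (xs : 'rV[R]_d)
  (x0 : 'rV[R]_d) (w0 : 'I_n -> 'rV[R]_d) (eps : R) :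
  (0 < n)%N ->
  0 < mu -> 0 < nu ->
  (forall i x, differentiable (fs i) x) ->
  (forall i, strongly_convex mu (fs i)) ->
  (forall x : 'rV[R]_d,
     n%:R^-1 * \sum_(i < n) fs i xs <= n%:R^-1 * \sum_(i < n) fs i x) ->
  (forall w : 'I_n -> 'rV[R]_d,
     n%:R^-1 * \sum_(j < n)
        sqnorm (grad (fs j) (w j) - n%:R^-1 *: \sum_(i < n) grad (fs i) (w i)
                - grad (fs j) xs)
     <= nu ^+ 2 * (n%:R^-1 * \sum_(j < n) sqnorm (w j - xs))) ->
  0 < eps ->
  let gamma := (nu ^+ 2 / mu + (n%:R - 1) * mu)^-1 in
  forall k : nat,
    (n%:R + nu ^+ 2 / mu ^+ 2) * ln (Psi gamma mu xs (x0, w0) / eps) <= k%:R ->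
    expected_Psi fs gamma mu xs x0 w0 k <= eps.
Proof.
move=> n0 mu0 nu0 df sc _ Hs e0 gamma k Hk.
have nR1 : 1 <= n%:R :> R by rewrite ler1n.
have D0 : 0 < nu ^+ 2 / mu + (n%:R - 1) * mu.
  have h1 : 0 < nu ^+ 2 / mu by rewrite divr_gt0 // exprn_gt0.
  have h2 : 0 <= (n%:R - 1) * mu by rewrite mulr_ge0 // ?subr_ge0 // ltW.
  lra.
have g0 : 0 < gamma by rewrite invr_gt0.
have gm0 : 0 < gamma * mu by rewrite mulr_gt0.
have Hg := @gamma_id R mu nu n%:R mu0 nR1 nu0.
set rho := (1 + gamma * mu)^-1.
have rho0 : 0 <= rho by rewrite invr_ge0 ltW // ltr_wpDr // ltW.
have Hst : forall st, \sum_(i < n) Psi gamma mu xs (psaga_step fs gamma st i) <=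
              n%:R * rho * Psi gamma mu xs st.
  by case=> x w; exact: step_sum n0 mu0 g0 sc df Hs Hg.
have E := Ek_le n0 rho0 Hst k (x0, w0).
apply: le_trans E _.
have a1 : 1 + gamma * mu != 0 by rewrite gt_eqF // ltr_wpDr // ltW.
apply: (final_arith (q := gamma * mu / (1 + gamma * mu)) _ _ rho0 _ _ e0 Hk).
- by rewrite divr_gt0 // ltr_wpDr // ltW.
- rewrite /gamma; field.
  have h1 : 0 < nu ^+ 2 by rewrite exprn_gt0.
  have h2 : 0 <= (n%:R - 1) * mu * mu by rewrite !mulr_ge0 // ?subr_ge0 // ltW.
  have h3 : 0 < mu * mu by rewrite mulr_gt0.
  rewrite (gt_eqF mu0) /=; apply/andP; split; rewrite gt_eqF //; lra.
- by rewrite /rho le_eqVlt; apply/orP; left; apply/eqP; field.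
- exact: Psi_ge0 (ltW gm0).
Qed.
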